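(* Let $p$ be a propositional variable. A substitution $\sigma$ is a unifier of $[1]p$ in $\mathbf{GLP}$ if and only if, for some $k\geq 1$, $\sigma\leq(Q_k(p)\to p)$, where $(Q_k(p)\to p)$ denotes the substitution $p\mapsto(Q_k(p)\to p)$.
   Context: $\mathbf{GLP}$ is the propositional polymodal logic with modalities $[0],[1],\dots$ ($\langle k\rangle:=\neg[k]\neg$) axiomatized by classical tautologies; $[k](\phi\to\psi)\to([k]\phi\to[k]\psi)$; $[k]([k]\phi\to\phi)\to[k]\phi$; $\langle j\rangle\phi\to[k]\langle j\rangle\phi$ for $j<k$; $[j]\phi\to[k]\phi$ for $j\leq k$; rules modus ponens and necessitation. A substitution commutes with all connectives and modalities; $\sigma$ is a unifier of $[1]p$ if $\mathbf{GLP}\vdash[1]\sigma(p)$. $\tau\leq\sigma$ means there is a substitution $\theta$ with $\mathbf{GLP}\vdash\tau(q)\leftrightarrow\theta(\sigma(q))$ for every variable $q$. Define $Q_1(p):=p$ and $Q_{i+1}(p):=p\lor[0]Q_i(p)$. *)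

(* Defs.v *)
From Stdlib Require Import Arith.

Inductive form : Type :=
| Var : nat -> form
| Bot : form
| Imp : form -> form -> form
| Box : nat -> form -> form.

Definition Neg (a : form) : form := Imp a Bot.
Definition Top : form := Neg Bot.
Definition Or (a b : form) : form := Imp (Neg a) b.
Definition And (a b : form) : form := Neg (Imp a (Neg b)).
Definition Iff (a b : form) : form := And (Imp a b) (Imp b a).
Definition Dia (k : nat) (a : form) : form := Neg (Box k (Neg a)).

Fixpoint peval (v : form -> bool) (f : form) : bool :=
  match f with
  | Var _ => v f
  | Bot => false
  | Imp a b => implb (peval v a) (peval v b)
  | Box _ _ => v f
  end.

(* A classical tautology: an instance of a propositional tautology,
   i.e. true under every assignment to its atoms. *)
Definition tautology (f : form) : Prop := forall v, peval v f = true.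

Inductive Prf : form -> Prop :=
| ax_taut : forall f, tautology f -> Prf f
| ax_K : forall k a b, Prf (Imp (Box k (Imp a b)) (Imp (Box k a) (Box k b)))
| ax_Loeb : forall k a, Prf (Imp (Box k (Imp (Box k a) a)) (Box k a))
| ax_dia : forall j k a, j < k -> Prf (Imp (Dia j a) (Box k (Dia j a)))
| ax_mono : forall j k a, j <= k -> Prf (Imp (Box j a) (Box k a))
| rule_mp : forall a b, Prf (Imp a b) -> Prf a -> Prf b
| rule_nec : forall k a, Prf a -> Prf (Box k a).

Definition subst := nat -> form.

Fixpoint apply_subst (s : subst) (f : form) : form :=
  match f with
  | Var n => s n
  | Bot => Bot
  | Imp a b => Imp (apply_subst s a) (apply_subst s b)
  | Box k a => Box k (apply_subst s a)
  end.

Definition unifier_box1 (p : nat) (sigma : subst) : Prop :=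
  Prf (Box 1 (sigma p)).

Definition subst_le (tau sigma : subst) : Prop :=
  exists theta : subst, forall q, Prf (Iff (tau q) (apply_subst theta (sigma q))).

(* Q_1(p) = p, Q_{i+1}(p) = p \/ [0] Q_i(p)  (Q 0 is an unused dummy = p) *)
Fixpoint Q (i : nat) (p : nat) : form :=
  match i with
  | 0 => Var p
  | 1 => Var p
  | S i' => Or (Var p) (Box 0 (Q i' p))
  end.

Definition Qsubst (k p : nat) : subst :=
  fun q => if Nat.eqb q p then Imp (Q k p) (Var p) else Var q.

(* Main.v *)
Require Import Defs.
From Stdlib Require Import Arith Lia List Bool Classical ClassicalEpsilon.
Import ListNotations.

Fixpoint rho (l : list form) : form :=
  match l with nil => Top | x :: l => And (Imp (Box 0 x) x) (rho l) end.

Lemma peval_rho_app v l1 l2 :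
  peval v (rho (l1 ++ l2)) = peval v (rho l1) && peval v (rho l2).
Proof.
  induction l1 as [|x l1 IH]; simpl. reflexivity.
  rewrite IH. destruct (v (Box 0 x)), (peval v x), (peval v (rho l1)), (peval v (rho l2)); reflexivity.
Qed.

Ltac tauto_bool :=
  let v := fresh "v" in intro v; cbn [peval Neg Top Or And Iff Dia];
  rewrite ?peval_rho_app; cbn [peval rho Neg Top Or And Iff Dia];
  repeat (match goal with
    | |- context [peval v ?x] => destruct (peval v x)
    | |- context [v ?x] => destruct (v x) end; cbn); try reflexivity.

Lemma tmp1 A B : tautology (Imp A B) -> Prf A -> Prf B.
Proof. intros t h. exact (rule_mp _ _ (ax_taut _ t) h). Qed.
Lemma tmp2 A B C : tautology (Imp A (Imp B C)) -> Prf A -> Prf B -> Prf C.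
Proof. intros t h1 h2. exact (rule_mp _ _ (rule_mp _ _ (ax_taut _ t) h1) h2). Qed.
Lemma tmp3 A B C D : tautology (Imp A (Imp B (Imp C D))) -> Prf A -> Prf B -> Prf C -> Prf D.
Proof. intros t h1 h2 h3. exact (rule_mp _ _ (rule_mp _ _ (rule_mp _ _ (ax_taut _ t) h1) h2) h3). Qed.
Lemma tmp4 A B C D E : tautology (Imp A (Imp B (Imp C (Imp D E)))) -> Prf A -> Prf B -> Prf C -> Prf D -> Prf E.
Proof. intros t h1 h2 h3 h4. exact (rule_mp _ _ (tmp3 _ _ _ _ t h1 h2 h3) h4). Qed.
Lemma taut_prf A : tautology A -> Prf A.
Proof. apply ax_taut. Qed.

Lemma box_mono k A B : Prf (Imp A B) -> Prf (Imp (Box k A) (Box k B)).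
Proof. intro h. exact (rule_mp _ _ (ax_K k A B) (rule_nec _ _ h)). Qed.

Lemma box_and k A B : Prf (Imp (Box k A) (Imp (Box k B) (Box k (And A B)))).
Proof.
  assert (h1 : Prf (Imp (Box k A) (Box k (Imp B (And A B))))).
  { apply box_mono. apply taut_prf. tauto_bool. }
  pose proof (ax_K k B (And A B)) as h2.
  refine (tmp2 _ _ _ _ h1 h2). tauto_bool.
Qed.

Lemma four k a : Prf (Imp (Box k a) (Box k (Box k a))).
Proof.
  set (chi := And a (Box k a)).
  assert (t0 : Prf (Imp (Box k chi) (Box k a))) by (apply box_mono; apply taut_prf; unfold chi; tauto_bool).
  assert (t1 : Prf (Imp a (Imp (Box k chi) chi))) by (refine (tmp1 _ _ _ t0); unfold chi; tauto_bool).
  pose proof (box_mono k _ _ t1) as t2.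
  pose proof (ax_Loeb k chi) as t3.
  assert (t4 : Prf (Imp (Box k chi) (Box k (Box k a)))) by (apply box_mono; apply taut_prf; unfold chi; tauto_bool).
  refine (tmp3 _ _ _ _ _ t2 t3 t4). tauto_bool.
Qed.

Lemma box0_box1box0 a : Prf (Imp (Box 0 a) (Box 1 (Box 0 a))).
Proof.
  pose proof (four 0 a). pose proof (ax_mono 0 1 (Box 0 a) (le_S _ _ (le_n 0))).
  refine (tmp2 _ _ _ _ H H0). tauto_bool.
Qed.

Lemma negbox_box1 X : Prf (Imp (Neg (Box 0 X)) (Box 1 (Neg (Box 0 X)))).
Proof.
  pose proof (ax_dia 0 1 (Neg X) (le_n 1)) as h.
  assert (e1 : Prf (Imp (Box 0 (Neg (Neg X))) (Box 0 X))) by (apply box_mono; apply taut_prf; tauto_bool).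
  assert (e2 : Prf (Imp (Box 0 X) (Box 0 (Neg (Neg X))))) by (apply box_mono; apply taut_prf; tauto_bool).
  assert (e3 : Prf (Imp (Box 1 (Dia 0 (Neg X))) (Box 1 (Neg (Box 0 X))))).
  { apply box_mono. refine (tmp1 _ _ _ e2). tauto_bool. }
  refine (tmp3 _ _ _ _ _ h e1 e3). tauto_bool.
Qed.

Lemma refl1 psi : Prf (Box 1 (Imp (Box 0 psi) psi)).
Proof.
  pose proof (ax_mono 0 1 psi (le_S _ _ (le_n 0))) as h1.
  assert (h2 : Prf (Imp (Box 1 psi) (Box 1 (Imp (Box 0 psi) psi)))) by (apply box_mono; apply taut_prf; tauto_bool).
  pose proof (negbox_box1 psi) as h3.
  assert (h4 : Prf (Imp (Box 1 (Neg (Box 0 psi))) (Box 1 (Imp (Box 0 psi) psi)))) by (apply box_mono; apply taut_prf; tauto_bool).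
  refine (tmp4 _ _ _ _ _ _ h1 h2 h3 h4). tauto_bool.
Qed.

Lemma rho1 l : Prf (Box 1 (rho l)).
Proof.
  induction l as [|x l IH]; simpl.
  - apply rule_nec. apply taut_prf. tauto_bool.
  - pose proof (box_and 1 (Imp (Box 0 x) x) (rho l)) as h.
    exact (rule_mp _ _ (rule_mp _ _ h (refl1 x)) IH).
Qed.
Fixpoint Qf (i : nat) (a : form) : form :=
  match i with
  | 0 => a
  | 1 => a
  | S i' => Or a (Box 0 (Qf i' a))
  end.

Lemma apply_Q s k p : apply_subst s (Q k p) = Qf k (s p).
Proof.
  induction k as [|k IH]; [reflexivity|].
  destruct k as [|k]; [reflexivity|].
  change (Q (S (S k)) p) with (Or (Var p) (Box 0 (Q (S k) p))).
  change (Qf (S (S k)) (s p)) with (Or (s p) (Box 0 (Qf (S k) (s p)))).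
  rewrite <- IH. reflexivity.
Qed.

Lemma Qf1 k b : 1 <= k -> Prf (Box 1 (Imp (Qf k b) b)).
Proof.
  induction k as [|k IH]; intro Hk; [lia|].
  destruct k as [|k].
  - simpl. apply rule_nec. apply taut_prf. tauto_bool.
  - specialize (IH ltac:(lia)).
    change (Qf (S (S k)) b) with (Or b (Box 0 (Qf (S k) b))).
    set (X := Qf (S k) b) in *.
    pose proof (ax_mono 0 1 X (le_S _ _ (le_n 0))) as h1.
    pose proof (rule_mp _ _ (ax_K 1 X b) IH) as h2.
    assert (h3 : Prf (Imp (Box 1 b) (Box 1 (Imp (Or b (Box 0 X)) b)))) by (apply box_mono; apply taut_prf; tauto_bool).
    pose proof (negbox_box1 X) as h4.
    assert (h5 : Prf (Imp (Box 1 (Neg (Box 0 X))) (Box 1 (Imp (Or b (Box 0 X)) b)))) by (apply box_mono; apply taut_prf; tauto_bool).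
    assert (h23 : Prf (Imp (Box 1 X) (Box 1 (Imp (Or b (Box 0 X)) b)))) by (refine (tmp2 _ _ _ _ h2 h3); tauto_bool).
    refine (tmp4 _ _ _ _ _ _ h1 h23 h4 h5). tauto_bool.
Qed.

Lemma all_neg c X Rs :
  (forall psi, In psi Rs -> Prf (Imp c (Imp (Box 0 psi) (Box 0 X)))) ->
  Prf (Imp c (Imp (Neg (Box 0 X)) (rho Rs))).
Proof.
  induction Rs as [|psi Rs IH]; intro H.
  - apply taut_prf. tauto_bool.
  - pose proof (H psi (or_introl eq_refl)) as h1.
    pose proof (IH (fun q Hq => H q (or_intror Hq))) as h2.
    refine (tmp2 _ _ _ _ h1 h2). tauto_bool.
Qed.

Lemma refl_Q n : forall Rs, length Rs <= n -> forall a c,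
  Prf (Imp c (Box 0 c)) -> Prf (Imp c (Imp (rho Rs) a)) -> Prf (Imp c (Qf (S n) a)).
Proof.
  induction n as [|n IH]; intros Rs HL a c Hc HR.
  - destruct Rs; [|simpl in HL; lia]. simpl.
    refine (tmp1 _ _ _ HR). tauto_bool.
  - change (Qf (S (S n)) a) with (Or a (Box 0 (Qf (S n) a))).
    set (X := Qf (S n) a).
    assert (Hpsi : forall psi, In psi Rs -> Prf (Imp c (Imp (Box 0 psi) (Box 0 X)))).
    { intros psi Hin. destruct (in_split _ _ Hin) as [l1 [l2 E]]. subst Rs.
      set (c' := And c (And psi (Box 0 psi))).
      pose proof (four 0 psi) as f1.
      pose proof (box_and 0 psi (Box 0 psi)) as f2.
      pose proof (box_and 0 c (And psi (Box 0 psi))) as f3.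
      assert (hcb : Prf (Imp c (Imp (Box 0 psi) (Box 0 c')))).
      { unfold c'. refine (tmp4 _ _ _ _ _ _ Hc f1 f2 f3). tauto_bool. }
      assert (hc' : Prf (Imp c' (Box 0 c'))).
      { refine (tmp1 _ _ _ hcb). unfold c'. tauto_bool. }
      assert (hR' : Prf (Imp c' (Imp (rho (l1 ++ l2)) a))).
      { refine (tmp1 _ _ _ HR). unfold c'. tauto_bool. }
      rewrite length_app in HL. simpl in HL.
      assert (HL' : length (l1 ++ l2) <= n) by (rewrite length_app; lia).
      pose proof (IH _ HL' a c' hc' hR') as h.
      pose proof (box_mono 0 _ _ h) as hb.
      refine (tmp2 _ _ _ _ hcb hb). tauto_bool. }
    pose proof (all_neg c X Rs Hpsi) as h.
    refine (tmp2 _ _ _ _ h HR). tauto_bool.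
Qed.

Lemma refl_Q_cor Rs a : Prf (Imp (rho Rs) a) -> Prf (Qf (S (length Rs)) a).
Proof.
  intro H.
  assert (Hc : Prf (Imp Top (Box 0 Top))).
  { pose proof (rule_nec 0 Top (taut_prf Top ltac:(tauto_bool))) as h.
    refine (tmp1 _ _ _ h). tauto_bool. }
  assert (HR : Prf (Imp Top (Imp (rho Rs) a))) by (refine (tmp1 _ _ _ H); tauto_bool).
  pose proof (refl_Q (length Rs) Rs (le_n _) a Top Hc HR) as h.
  refine (tmp1 _ _ _ h). tauto_bool.
Qed.
Definition Good (a D : form) : Prop := forall Rs, ~ Prf (Imp D (Imp (rho Rs) a)).
Definition decided (g chi : form) : Prop :=
  Prf (Imp g (Box 0 chi)) \/ Prf (Imp g (Neg (Box 0 chi))).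

Lemma good_ext a D chi : Good a D ->
  Good a (And D (Box 0 chi)) \/ Good a (And D (Neg (Box 0 chi))).
Proof.
  intro G. destruct (classic (Good a (And D (Box 0 chi)))) as [h|h]; [left; exact h|right].
  intros Rs2 H2. unfold Good in h. apply not_all_not_ex in h. destruct h as [Rs1 H1].
  apply (G (Rs1 ++ Rs2)). refine (tmp2 _ _ _ _ H1 H2). tauto_bool.
Qed.

Lemma decide_list a F : forall D, Good a D -> exists D', Good a D' /\ Prf (Imp D' D) /\
  forall chi, In chi F -> decided D' chi.
Proof.
  induction F as [|chi F IH]; intros D G.
  - exists D. split; [exact G|split; [apply taut_prf; tauto_bool|intros _ []]].
  - destruct (good_ext a D chi G) as [G1|G1].
    + destruct (IH _ G1) as [D' [G' [HD' Hd]]]. exists D'. split; [exact G'|split].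
      * refine (tmp1 _ _ _ HD'). tauto_bool.
      * intros c [<-|Hin]; [left; refine (tmp1 _ _ _ HD'); tauto_bool|exact (Hd c Hin)].
    + destruct (IH _ G1) as [D' [G' [HD' Hd]]]. exists D'. split; [exact G'|split].
      * refine (tmp1 _ _ _ HD'). tauto_bool.
      * intros c [<-|Hin]; [right; refine (tmp1 _ _ _ HD'); tauto_bool|exact (Hd c Hin)].
Qed.

Definition T1 (g x : form) : Prop := exists L Rs,
  Prf (Imp g L) /\ Prf (Imp L (Box 1 L)) /\ Prf (Imp L (Imp (rho Rs) x)).

Fixpoint Sat (g : form) (f : form) : Prop :=
  match f with
  | Var _ => False
  | Bot => False
  | Imp a b => Sat g a -> Sat g b
  | Box k a => match k with 0 => Prf (Imp g (Box 0 a)) | 1 => T1 g a | _ => True end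
  end.

Definition bv (P : Prop) : bool := if excluded_middle_informative P then true else false.
Lemma bv_spec P : bv P = true <-> P.
Proof. unfold bv. destruct (excluded_middle_informative P); split; intro; congruence || tauto. Qed.

Lemma Sat_peval g f : peval (fun h => bv (Sat g h)) f = true <-> Sat g f.
Proof.
  induction f as [n| |a IHa b IHb|k a IHa]; simpl.
  - apply bv_spec.
  - split; [discriminate|tauto].
  - rewrite <- IHa, <- IHb. destruct (peval _ a), (peval _ b); simpl; intuition congruence.
  - apply (bv_spec (Sat g (Box k a))).
Qed.

Lemma sound f : Prf f -> exists F, forall g, (forall chi, In chi F -> decided g chi) -> Sat g f.
Proof.
  induction 1 as [f Ht|k a b|k a|j k a Hjk|j k a Hjk|a b H1 IH1 H2 IH2|k a Ha IH].
  - exists nil. intros g _. apply Sat_peval. apply Ht.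
  - exists nil. intros g _. destruct k as [|[|k]]; simpl.
    + intros h1 h2. refine (tmp3 _ _ _ _ _ h1 h2 (ax_K 0 a b)). tauto_bool.
    + intros [L1 [R1 [h1 [h2 h3]]]] [L2 [R2 [h4 [h5 h6]]]].
      exists (And L1 L2), (R1 ++ R2). split; [|split].
      * refine (tmp2 _ _ _ _ h1 h4). tauto_bool.
      * refine (tmp3 _ _ _ _ _ h2 h5 (box_and 1 L1 L2)). tauto_bool.
      * refine (tmp2 _ _ _ _ h3 h6). tauto_bool.
    + intros _ _. exact I.
  - exists nil. intros g _. destruct k as [|[|k]]; simpl.
    + intros h1. refine (tmp2 _ _ _ _ h1 (ax_Loeb 0 a)). tauto_bool.
    + intros [L [R [h1 [h2 h3]]]]. exists L, R. split; [exact h1|split; [exact h2|]].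
      pose proof (rho1 R) as hb.
      assert (hL : Prf (Imp L (Box 1 (And L (rho R))))).
      { refine (tmp3 _ _ _ _ _ hb h2 (box_and 1 L (rho R))). tauto_bool. }
      assert (h3' : Prf (Imp (And L (rho R)) (Imp (Box 1 a) a))) by (refine (tmp1 _ _ _ h3); tauto_bool).
      pose proof (box_mono 1 _ _ h3') as h4.
      refine (tmp4 _ _ _ _ _ _ hL h4 (ax_Loeb 1 a) h3). tauto_bool.
    + intros _. exact I.
  - exists [Neg a]. intros g Hd. destruct k as [|[|k]]; [lia| |].
    + destruct j; [|lia]. simpl. intros Hn.
      destruct (Hd (Neg a) (or_introl eq_refl)) as [h|h]; [contradiction|].
      exists (Dia 0 a), nil. split; [exact h|split; [exact (ax_dia 0 1 a Hjk)|]].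
      apply taut_prf. tauto_bool.
    + simpl. intros _. exact I.
  - exists nil. intros g _. destruct k as [|[|k]].
    + destruct j; [|lia]. simpl. tauto.
    + destruct j as [|[|j]]; [|simpl; tauto|lia]. simpl. intros h1.
      exists (Box 0 a), [a]. split; [exact h1|split; [apply box0_box1box0|]].
      apply taut_prf. tauto_bool.
    + simpl. intros _. exact I.
  - destruct IH1 as [F1 HF1]. destruct IH2 as [F2 HF2]. exists (F1 ++ F2).
    intros g Hd. simpl in HF1.
    apply (HF1 g); [intros c Hc; apply Hd; apply in_or_app; left; exact Hc|].
    apply (HF2 g). intros c Hc; apply Hd; apply in_or_app; right; exact Hc.
  - exists nil. intros g _. destruct k as [|[|k]]; simpl.
    + refine (tmp1 _ _ _ (rule_nec 0 a Ha)). tauto_bool.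
    + exists Top, nil. split; [apply taut_prf; tauto_bool|split].
      * refine (tmp1 _ _ _ (rule_nec 1 Top (taut_prf Top ltac:(tauto_bool)))). tauto_bool.
      * refine (tmp1 _ _ _ Ha). tauto_bool.
    + exact I.
Qed.

Lemma key a : Prf (Box 1 a) -> exists k, 1 <= k /\ Prf (Qf k a).
Proof.
  intro H. apply NNPP. intro Hno.
  assert (G0 : Good a Top).
  { intros Rs HR. apply Hno. exists (S (length Rs)). split; [lia|].
    apply refl_Q_cor. refine (tmp1 _ _ _ HR). tauto_bool. }
  destruct (sound _ H) as [F HF].
  destruct (decide_list a F Top G0) as [D [GD [_ HdD]]].
  assert (HS : Sat (And (Neg a) D) (Box 1 a)).
  { apply HF. intros chi Hin. destruct (HdD chi Hin) as [h|h]; [left|right];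
    refine (tmp1 _ _ _ h); tauto_bool. }
  destruct HS as [L [Rs [h1 [_ h3]]]].
  apply (GD Rs). refine (tmp2 _ _ _ _ h1 h3). tauto_bool.
Qed.

Theorem mainTheorem17 (p : nat) (sigma : subst) :
  unifier_box1 p sigma <-> exists k : nat, 1 <= k /\ subst_le sigma (Qsubst k p).
Proof.
  split.
  - intro H. destruct (key _ H) as [k [Hk HQ]]. exists k. split; [exact Hk|].
    exists sigma. intro q. unfold Qsubst.
    destruct (Nat.eqb q p) eqn:E.
    + apply Nat.eqb_eq in E. subst q.
      change (apply_subst sigma (Imp (Q k p) (Var p))) with
        (Imp (apply_subst sigma (Q k p)) (sigma p)).
      rewrite apply_Q. refine (tmp1 _ _ _ HQ). tauto_bool.
    + change (apply_subst sigma (Var q)) with (sigma q). apply taut_prf. tauto_bool.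
  - intros [k [Hk [theta Ht]]]. specialize (Ht p). unfold Qsubst in Ht.
    rewrite Nat.eqb_refl in Ht.
    change (apply_subst theta (Imp (Q k p) (Var p))) with
        (Imp (apply_subst theta (Q k p)) (theta p)) in Ht.
    rewrite apply_Q in Ht.
    pose proof (Qf1 k (theta p) Hk) as hb.
    assert (hi : Prf (Imp (Imp (Qf k (theta p)) (theta p)) (sigma p))) by (refine (tmp1 _ _ _ Ht); tauto_bool).
    unfold unifier_box1. exact (rule_mp _ _ (box_mono 1 _ _ hi) hb).
Qed.
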